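(* Let $G=(V,E)$ be a directed labeled graph with vertex-labeling function $l_V:V\to\mathcal{X}$ and edge-labeling function $l_E:E\to\mathcal{Z}$, where $\mathcal{X},\mathcal{Z}$ are countable sets. Let $c_l^{(t)}$ be the Weisfeiler--Lehman colorings for directed labeled graphs and $f^{(t)}$ the GNN node representations defined in the context below. Then for all $t\ge 0$, for all choices of initial representations $f^{(0)}$ consistent with $l_V$, of edge embeddings $f_E$ consistent with $l_E$, and of weight matrices $W_1^{(t)},W_2^{(t)},W_3^{(t)},W_4^{(t)}$, we have $$c_l^{(t)}(v)=c_l^{(t)}(u)\ \Longrightarrow\ f^{(t)}(v)=f^{(t)}(u)\qquad\text{for all } u,v\in V.$$
   Context: A directed edge $(u,v)\in E$ starts at $u$ and ends at $v$. Neighborhoods: $\mathcal{N}(v)=\{u\in V: (v,u)\in E \text{ or } (u,v)\in E\}$, $\mathcal{N}^I(v)=\{u:(u,v)\in E\}$, $\mathcal{N}^O(v)=\{u:(v,u)\in E\}$. For an edge label $e\in\mathcal{Z}$, let $n^I_v(e)=|\{u\in\mathcal{N}^I(v): l_E(u,v)=e\}|$ and $n^O_v(e)=|\{u\in\mathcal{N}^O(v): l_E(v,u)=e\}|$. Weisfeiler--Lehman coloring: $c_l^{(0)}(v)=l_V(v)$, and for $t\ge1$ $$c_l^{(t)}(v)=g\Big(c_l^{(t-1)}(v),\ \{\{c_l^{(t-1)}(u):u\in\mathcal{N}(v)\}\},\ \{(n^I_v(e),e): \exists (u,v)\in E \text{ with } l_E(u,v)=e\},\ \{(n^O_v(e),e):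 \exists (v,u)\in E \text{ with } l_E(v,u)=e\}\Big),$$ where $g$ is an injective hashing function and $\{\{\cdot\}\}$ denotes a multiset. GNN: $f^{(t)}(v)\in\mathbb{R}^{1\times d^{(t)}}$, with $$f^{(t)}(v)=\sigma\Big(f^{(t-1)}(v)W_1^{(t)}+\sum_{u\in\mathcal{N}(v)}f^{(t-1)}(u)W_2^{(t)}+\sum_{(u,v)\in E}f_E(u,v,l_E(u,v))W_3^{(t)}+\sum_{(v,u)\in E}f_E(v,u,l_E(v,u))W_4^{(t)}\Big),$$ where $\sigma$ is an elementwise activation function, $W_1^{(t)},W_2^{(t)}\in\mathbb{R}^{d^{(t-1)}\times d^{(t)}}$, $W_3^{(t)},W_4^{(t)}\in\mathbb{R}^{d_E\times d^{(t)}}$, and $f_E(u,v,l_E(u,v))\in\mathbb{R}^{1\times d_E}$ is an embedding of the edge $(u,v)$. $f^{(0)}$ is consistent with $l_V$ if $f^{(0)}(v)=f^{(0)}(u)\iff l_V(v)=l_V(u)$ for all $u,v\in V$. The edge embeddings $f_E$ are consistent with $l_E$ if for all vertices $v,v'$: $\sum_{(u,v)\in E}f_E(u,v,l_E(u,v))=\sum_{(u,v')\in E}f_E(u,v',l_E(u,v'))$ if and only if $\{(n^I_v(e),e):\exists(u,v)\in E, l_E(u,v)=e\}=\{(n^I_{v'}(e),e):\exists(u,v')\in E, l_E(u,v')=e\}$, and the analogous equivalence holds for sums over outgoing edges $(v,u)\in E$ and the sets built from $n^O$. *)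

(* Defs.v *)
From HB Require Import structures.
From mathcomp Require Import all_boot all_order all_algebra.
From mathcomp Require Import finmap multiset.
From mathcomp Require Import reals.

Set Implicit Arguments. Unset Strict Implicit. Unset Printing Implicit Defensive.
Import Order.TTheory GRing.Theory Num.Theory.
Local Open Scope ring_scope.
Local Open Scope fset_scope.

(* The edge labeling l_E : E -> Z is modelled by a
   function lE : V -> V -> Z whose values on non-edges are irrelevant. *)
Section Graph.
Variables (V : finType) (E : rel V).

Definition nbr (v : V) : pred V := fun u => E v u || E u v.
Definition in_nbr (v : V) : pred V := fun u => E u v.
Definition out_nbr (v : V) : pred V := fun u => E v u.

Variables (Z : countType) (lE : V -> V -> Z).

Definition nI (v : V) (e : Z) : nat := #|[pred u | E u v & lE u v == e]|.
Definition nO (v : V) (e : Z) : nat := #|[pred u | E v u & lE v u == e]|.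

Definition in_lab_set (v : V) : {fset nat * Z} :=
  [fset x in [seq (nI v (lE u v), lE u v) | u <- enum (in_nbr v)]].
Definition out_lab_set (v : V) : {fset nat * Z} :=
  [fset x in [seq (nO v (lE v u), lE v u) | u <- enum (out_nbr v)]].

(* Weisfeiler--Lehman coloring. Colors live in a choiceType C; the initial
   color is l_V(v) (embedded injectively into C by iota), and g is the
   injective hash. *)
Variables (X : countType) (lV : V -> X) (C : choiceType) (iota : X -> C)
  (g : C -> {mset C}%mset -> {fset nat * Z} -> {fset nat * Z} -> C).

Fixpoint wl (t : nat) : V -> C :=
  match t with
  | 0 => fun v => iota (lV v)
  | t'.+1 => fun v =>
      g (wl t' v) (seq_mset [seq wl t' u | u <- enum (nbr v)])
        (in_lab_set v) (out_lab_set v)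
  end.

Variables (R : realType) (sigma : R -> R) (d : nat -> nat) (dE : nat)
  (f0 : V -> 'rV[R]_(d 0))
  (fE : V -> V -> Z -> 'rV[R]_dE)
  (W1 W2 : forall t, 'M[R]_(d t, d t.+1))
  (W3 W4 : forall t, 'M[R]_(dE, d t.+1)).

Fixpoint gnn (t : nat) : V -> 'rV[R]_(d t) :=
  match t as t0 return V -> 'rV[R]_(d t0) with
  | 0 => f0
  | t'.+1 => fun v =>
      map_mx sigma
        (gnn t' v *m W1 t'
         + \sum_(u | nbr v u) (gnn t' u *m W2 t')
         + \sum_(u | E u v) (fE u v (lE u v) *m W3 t')
         + \sum_(u | E v u) (fE v u (lE v u) *m W4 t'))
  end.

End Graph.

Definition consistent_init (V : finType) (X : Type) (R : Type) (n : nat)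
  (lV : V -> X) (f0 : V -> 'rV[R]_n) : Prop :=
  forall u v : V, f0 v = f0 u <-> lV v = lV u.

Definition consistent_edge (V : finType) (E : rel V) (Z : countType)
  (lE : V -> V -> Z) (R : ringType) (dE : nat) (fE : V -> V -> Z -> 'rV[R]_dE)
  : Prop :=
  (forall v v' : V,
     \sum_(u | E u v) fE u v (lE u v) = \sum_(u | E u v') fE u v' (lE u v')
     <-> in_lab_set E lE v = in_lab_set E lE v')
  /\
  (forall v v' : V,
     \sum_(u | E v u) fE v u (lE v u) = \sum_(u | E v' u) fE v' u (lE v' u)
     <-> out_lab_set E lE v = out_lab_set E lE v').

(* Main.v *)
Require Import Defs.
From HB Require Import structures.
From mathcomp Require Import all_boot all_order all_algebra.
From mathcomp Require Import finmap multiset.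
From mathcomp Require Import reals.

Theorem theorem1
  (V : finType) (E : rel V) (X Z : countType) (lV : V -> X) (lE : V -> V -> Z)
  (C : choiceType) (iota : X -> C)
  (g : C -> {mset C}%mset -> {fset nat * Z} -> {fset nat * Z} -> C)
  (iota_inj : injective iota)
  (g_inj : forall a m s o a' m' s' o', g a m s o = g a' m' s' o' ->
             [/\ a = a', m = m', s = s' & o = o'])
  (R : realType) (sigma : R -> R) (d : nat -> nat) (dE : nat)
  (f0 : V -> 'rV[R]_(d 0)) (fE : V -> V -> Z -> 'rV[R]_dE)
  (W1 W2 : forall t, 'M[R]_(d t, d t.+1))
  (W3 W4 : forall t, 'M[R]_(dE, d t.+1)) :
  consistent_init lV f0 ->
  consistent_edge E lE fE ->
  forall (t : nat) (u v : V),
    wl E lE lV iota g t v = wl E lE lV iota g t u ->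
    gnn E lE sigma f0 fE W1 W2 W3 W4 t v = gnn E lE sigma f0 fE W1 W2 W3 W4 t u.
Proof.
move=> Hinit [Hin Hout]; elim=> [|t IH] u v /=.
  by move/iota_inj => H; apply/Hinit.
move=> /g_inj [Hc Hm Hi Ho].
set F := gnn E lE sigma f0 fE W1 W2 W3 W4 t.
set w := wl E lE lV iota g t in Hm Hc IH *.
pose h (c : C) : 'rV[R]_(d t) :=
  if [pick x | w x == c] is Some x then F x else 0%R.
have Fh : forall x, F x = h (w x).
  move=> x; rewrite /h; case: pickP => [y /eqP Hy|/(_ x)]; last by rewrite eqxx.
  by apply: IH.
have Hs : forall a, (\sum_(x | nbr E a x) (F x *m W2 t)
    = \sum_(c <- [seq w x | x <- enum (nbr E a)]) (h c *m W2 t))%R.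
  move=> a; rewrite big_map big_enum /=.
  by apply: eq_bigr => x _; rewrite Fh.
have -> : F v = F u := IH u v Hc.
rewrite Hs (Hs u) (perm_big _ (introT (eq_seq_msetP _ _) Hm)).
by rewrite -!mulmx_suml (proj2 (Hin v u) Hi) (proj2 (Hout v u) Ho).
Qed.
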